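(* Let $M$ be a vertically $k$-connected matroid on $E$, where $k\geq 2$ and $r(M)\geq \max\{3k-5,2\}$. Then $M$ has a unique tangle $\mathcal T$ of order $k$. Moreover a subset $A$ of $E$ belongs to $\mathcal T$ if and only if $r(A)\leq k-2$.
   Context: For a matroid $M$ on $E$ with rank function $r$, the connectivity function is $\lambda_M(X)=r(X)+r(E-X)-r(M)+1$. A $(k-1)$-separation of $M$ is a partition $(A,B)$ of $E$ with $\lambda_M(A)\le k-1$. Here ''vertically $k$-connected'' means (loosely vertically $k$-connected): for every $(k-1)$-separation $(A,B)$ of $M$, either $r(A)\le k-2$ or $r(B)\le k-2$. A tangle of order $k$ in $M$ is a collection $\mathcal T$ of subsets of $E$ such that (T1) $\lambda_M(A)<k$ for all $A\in\mathcal T$; (T2) if $\lambda_M(A)\le k-1$ then $A\in\mathcal T$ or $E-A\in\mathcal T$; (T3) $A\cup B\cup C\ne E$ for all $A,B,C\in\mathcal T$; (T4) $E-\{e\}\notin\mathcal T$ for each $e\in E$. *)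

(* Defs.v *)
From mathcomp Require Import all_boot.
Set Implicit Arguments. Unset Strict Implicit. Unset Printing Implicit Defensive.

Definition matroid_rank (E : finType) (r : {set E} -> nat) : Prop :=
  [/\ (forall X : {set E}, r X <= #|X|),
      (forall X Y : {set E}, X \subset Y -> r X <= r Y)
    & (forall X Y : {set E}, r (X :|: Y) + r (X :&: Y) <= r X + r Y)].

Definition mrank (E : finType) (r : {set E} -> nat) : nat := r [set: E].

Definition conn (E : finType) (r : {set E} -> nat) (X : {set E}) : nat :=
  r X + r (~: X) + 1 - mrank r.

(* loosely vertically k-connected *)
Definition vert_conn (E : finType) (r : {set E} -> nat) (k : nat) : Prop :=
  forall A : {set E}, conn r A <= k - 1 -> r A <= k - 2 \/ r (~: A) <= k - 2.

Definition tangle (E : finType) (r : {set E} -> nat) (k : nat)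
    (T : {set {set E}}) : Prop :=
  [/\ (forall A, A \in T -> conn r A < k),
      (forall A, conn r A <= k - 1 -> A \in T \/ ~: A \in T),
      (forall A B C, A \in T -> B \in T -> C \in T -> A :|: B :|: C != [set: E])
    & (forall e : E, ~: [set e] \notin T)].

(* Main.v *)
Require Import Defs.
From mathcomp Require Import all_boot.
From mathcomp Require Import zify.

Section S.
Variables (E : finType) (r : {set E} -> nat) (k : nat).
Hypothesis hr : matroid_rank r.
Hypothesis hk : 2 <= k.

Lemma rmono (X Y : {set E}) : X \subset Y -> r X <= r Y.
Proof. by case: hr => _ h _; apply: h. Qed.

Lemma rsubadd (X Y : {set E}) : r (X :|: Y) <= r X + r Y.
Proof. case: hr => _ _ h; have := h X Y; lia. Qed.

Lemma rE_ge (X : {set E}) : r X <= mrank r.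
Proof. exact: rmono (subsetT X). Qed.

Lemma conn_le (X : {set E}) : r X <= k - 2 -> conn r X <= k - 1.
Proof. rewrite /conn => h; have := rE_ge (~: X); lia. Qed.

Lemma r1 (e : E) : r [set e] <= 1.
Proof. case: hr => h _ _; have := h [set e]; by rewrite cards1. Qed.

Lemma L T' : tangle r k T' -> forall n (Y : {set E}), #|Y| <= n -> r Y <= k - 2 -> Y \in T'.
Proof.
case=> T1 T2 T3 T4; elim=> [|n IH] Y hY rY.
- have Y0 : Y = set0 by apply/eqP; rewrite -cards_eq0; lia.
  case: (T2 Y (@conn_le Y rY)) => // hc.
  have := T3 _ _ _ hc hc hc; by rewrite Y0 setC0 !setUid eqxx.
- case: (set_0Vmem Y) => [Y0|[e eY]].
  + apply: IH; [rewrite Y0 cards0 //|exact rY].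
  have Y1 : Y :\ e \in T'.
    apply: IH.
      by move: hY; rewrite (cardsD1 e Y) eY; lia.
    by apply: leq_trans rY; apply: rmono; apply: subsetDl.
  have He : [set e] \in T'.
    have re : r [set e] <= k - 2.
      by apply: leq_trans rY; apply: rmono; rewrite sub1set.
    case: (T2 _ (@conn_le _ re)) => // h; by have := T4 e; rewrite h.
  case: (T2 Y (@conn_le Y rY)) => // hc.
  have := T3 _ _ _ Y1 He hc.
  by rewrite (setUC (Y :\ e)) (setD1K eY) setUCr eqxx.
Qed.

End S.

Theorem lemma2p3 (E : finType) (r : {set E} -> nat) (k : nat) :
  matroid_rank r -> 2 <= k -> vert_conn r k ->
  maxn (3 * k - 5) 2 <= mrank r ->
  exists T : {set {set E}},
    [/\ tangle r k T,
        (forall T' : {set {set E}}, tangle r k T' -> T' = T)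
      & (forall A : {set E}, A \in T <-> r A <= k - 2)].
Proof.
move=> hr hk hv hE.
set T := [set A : {set E} | r A <= k - 2].
have memT A : A \in T <-> r A <= k - 2 by rewrite inE.
have tT : tangle r k T.
  split.
  - move=> A; rewrite inE => h; have := @conn_le E r k hr hk A h; lia.
  - move=> A /hv [h|h]; [left|right]; by rewrite inE.
  - move=> A B C; rewrite !inE => hA hB hC; apply/negP => /eqP hU.
    have := @rsubadd E r k hr hk (A :|: B) C; have := @rsubadd E r k hr hk A B.
    rewrite hU -/(mrank r); lia.
  - move=> e; rewrite inE; apply/negP => h.
    have := @rsubadd E r k hr hk (~: [set e]) [set e]; rewrite setUC setUCr -/(mrank r).
    have := @r1 E r hr e; lia.
exists T; split => // T' tT'; apply/setP => A; apply/idP/idP => hA.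
- case: (tT') => T1 _ T3 _.
  have hc : conn r A <= k - 1 by have := T1 _ hA; lia.
  rewrite inE; case: (hv _ hc) => // h2.
  have hc' := @L E r k hr hk T' tT' _ _ (leqnn _) h2.
  by have := T3 _ _ _ hA hc' hc'; rewrite -setUA setUid setUCr eqxx.
- rewrite inE in hA; exact: (@L E r k hr hk T' tT' _ _ (leqnn _) hA).
Qed.
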